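(* Let $G$ be a finite simple graph on $[d]$ and let $I\in\{\langle [I_G]_2\rangle, J_G, L_G\}$. If $\mathcal{G}$ is the reduced Gröbner basis of $I$ with respect to a reverse lexicographic order on $R[G]$ such that $x_S\ge x_\emptyset$ for every $S\in S(G)$, then $\{\, g/x_\emptyset^{k} : g\in\mathcal{G},\ k\in\mathbb{Z}_{\ge0},\ x_\emptyset^k \text{ divides } g,\ x_\emptyset^{k+1}\text{ does not divide } g\,\}$ is a Gröbner basis of $I_G$.
   Context: A stable set of $G$ is a subset of $[d]$ with no edge of $G$ (including $\emptyset$ and singletons); $S(G)$ is the set of stable sets; $R[G]=\mathbb{K}[x_S : S\in S(G)]$ over a field $\mathbb{K}$, all variables of degree $1$. $I_G$ is the kernel of $\pi:R[G]\to\mathbb{K}[t_1,\dots,t_d,s]$, $\pi(x_S)=s\prod_{j\in S}t_j$. $\langle [I_G]_2\rangle$ is the ideal generated by the degree-$2$ homogeneous elements of $I_G$. $J_G$ is the ideal generated by all $x_{S_1}x_{S_2}-x_{S_3}x_{S_4}$ with $S_i\in S(G)$, $S_1\cap S_2=S_3\cap S_4=\emptyset$, $S_1\cup S_2=S_3\cup S_4$. $L_G=\langle x_{S\setminus\{i\}}x_{\{i\}}-x_Sx_\emptyset : i\in S\in S(G),\ |S|\ge2\rangle$. The (graded) reverse lexicographic order induced by an ordering $y_1>\dots>y_n$ of the variables: $u<v$ if $\deg u<\deg v$, or degrees are equal and the rightmost nonzero entry of the exponent vector of $v$ minus that of $u$ is negative. A Gröbner basis of $I$ w.r.t. $<$ is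 a finite subset of $I$ whose leading monomials generate ${\rm in}_<(I)$; it is reduced if all leading coefficients are $1$ and no monomial of any element lies in the ideal generated by the leading monomials of the other elements. *)

(* Defs.v *)
From HB Require Import structures.
From mathcomp Require Import all_boot all_order all_algebra all_fingroup.
From mathcomp Require Import mpoly.
Set Implicit Arguments. Unset Strict Implicit. Unset Printing Implicit Defensive.
Import GRing.Theory.
Local Open Scope ring_scope.

Section Generic.
Variables (K : fieldType) (n : nat).
Local Notation P := {mpoly K[n]}.

Definition ideal_gen (A : P -> Prop) : P -> Prop :=
  fun p => exists s : seq (P * P),
    (forall x, x \in s -> A x.2) /\ p = \sum_(x <- s) x.1 * x.2.

Definition mdivides (a b : P) : Prop := exists q : P, b = a * q.

(* Graded reverse lexicographic order induced by the ordering of the variables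
   y_1 > y_2 > ... > y_n, where y_(k+1) is the variable with index  y k
   (y : {perm 'I_n}; position k = 0 is the largest variable).
   revlex_lt y u v  means  u < v. *)
Definition revlex_lt (y : {perm 'I_n}) (u v : 'X_{1..n}) : bool :=
  (mdeg u < mdeg v)%N ||
  ((mdeg u == mdeg v) &&
   [exists k : 'I_n,
      (v (y k) < u (y k))%N &&
      [forall l : 'I_n, (k < l)%N ==> (v (y l) == u (y l))]]).

Definition is_lm (y : {perm 'I_n}) (p : P) (m : 'X_{1..n}) : Prop :=
  m \in msupp p /\ (forall m', m' \in msupp p -> m' != m -> revlex_lt y m' m).

Definition LMs (y : {perm 'I_n}) (A : P -> Prop) : P -> Prop :=
  fun q => exists p m, A p /\ is_lm y p m /\ q = 'X_[m].

Definition init_ideal (y : {perm 'I_n}) (I : P -> Prop) : P -> Prop :=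
  ideal_gen (LMs y I).

Definition groebner_basis (y : {perm 'I_n}) (I Gs : P -> Prop) : Prop :=
  (exists s : seq P, forall p, Gs p <-> p \in s) /\
  (forall g, Gs g -> I g) /\
  (forall q, ideal_gen (LMs y Gs) q <-> init_ideal y I q).

Definition reduced_groebner_basis (y : {perm 'I_n}) (I Gs : P -> Prop) : Prop :=
  groebner_basis y I Gs /\
  (forall g, Gs g -> exists m, is_lm y g m /\ g@_m = 1) /\
  (forall g, Gs g -> forall m, m \in msupp g ->
     ~ ideal_gen (LMs y (fun h => Gs h /\ h <> g)) 'X_[m]).

End Generic.

Section Graph.
Variables (K : fieldType) (d : nat) (E : rel 'I_d).

Definition stable (S : {set 'I_d}) : bool :=
  [forall i in S, forall j in S, ~~ E i j].

Definition stabT := {S : {set 'I_d} | stable S}.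
Definition nS : nat := #|{: stabT}|.

Lemma stable_set0 : stable set0.
Proof. by apply/forallP => i; rewrite inE. Qed.

Definition stab_empty : stabT := exist _ set0 stable_set0.

Definition RG := {mpoly K[nS]}.
Definition xS (S : stabT) : RG := 'X_(enum_rank S).

(* pi : R[G] -> K[t_1,...,t_d,s],  t_j = 'X_(widen j), s = 'X_(ord_max) *)
Definition pi_img (S : stabT) : {mpoly K[d.+1]} :=
  'X_(@ord_max d) * \prod_(j in val S) 'X_(widen_ord (leqnSn d) j).
Definition pi_map (p : RG) : {mpoly K[d.+1]} :=
  mmap (fun c : K => c%:MP) (fun i : 'I_nS => pi_img (enum_val i)) p.

Definition I_G : RG -> Prop := fun p => pi_map p = 0.

Definition I_G2 : RG -> Prop :=
  ideal_gen (fun p => I_G p /\ all (fun m => mdeg m == 2%N) (msupp p)).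

Definition J_G : RG -> Prop :=
  ideal_gen (fun q => exists S1 S2 S3 S4 : stabT,
    [/\ val S1 :&: val S2 = set0, val S3 :&: val S4 = set0,
        val S1 :|: val S2 = val S3 :|: val S4 &
        q = xS S1 * xS S2 - xS S3 * xS S4]).

Definition L_G : RG -> Prop :=
  ideal_gen (fun q => exists (S S' Si : stabT) (i : 'I_d),
    [/\ i \in val S, (2 <= #|val S|)%N, val S' = val S :\ i,
        val Si = [set i] &
        q = xS S' * xS Si - xS S * xS stab_empty]).

End Graph.

Arguments stable {d} E S.
Arguments stabT {d} E.
Arguments nS {d} E.
Arguments stab_empty {d} E.
Arguments RG K {d} E.
Arguments xS K {d} E S.
Arguments pi_img K {d} E S.
Arguments pi_map K {d} E p.
Arguments I_G K {d} E p.
Arguments I_G2 K {d} E p.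
Arguments J_G K {d} E p.
Arguments L_G K {d} E p.

(* Main.v *)
Require Import Defs.
From HB Require Import structures.
From mathcomp Require Import all_boot all_order all_algebra all_fingroup.
From mathcomp Require Import mpoly.
From mathcomp Require Import ring.
From Stdlib Require Import Classical.
Set Implicit Arguments. Unset Strict Implicit. Unset Printing Implicit Defensive.
Import GRing.Theory.
Local Open Scope ring_scope.

Section Gen.
Variables (K : fieldType) (n : nat).
Local Notation P := {mpoly K[n]}.
Implicit Types (A B : P -> Prop) (p q r : P).

Lemma ig_ind A (Q : P -> Prop) :
  Q 0 -> (forall p q, Q p -> Q q -> Q (p + q)) ->
  (forall r p, A p -> Q (r * p)) -> forall p, ideal_gen A p -> Q p.
Proof.
move=> Q0 QD QM p [s [Hs ->]]; elim: s Hs => [|x s IH] Hs.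
  by rewrite big_nil.
rewrite big_cons; apply: QD; first by apply: QM; apply: Hs; rewrite inE eqxx.
by apply: IH => z zs; apply: Hs; rewrite inE zs orbT.
Qed.

Lemma ig0 A : ideal_gen A 0.
Proof. by exists [::]; rewrite big_nil. Qed.

Lemma igD A p q : ideal_gen A p -> ideal_gen A q -> ideal_gen A (p + q).
Proof.
move=> [s1 [H1 ->]] [s2 [H2 ->]]; exists (s1 ++ s2); rewrite big_cat; split=> //.
by move=> x; rewrite mem_cat => /orP [/H1|/H2].
Qed.

Lemma igM A r p : ideal_gen A p -> ideal_gen A (r * p).
Proof.
move=> [s [H ->]]; exists [seq (r * x.1, x.2) | x <- s]; split.
  by move=> x /mapP [z zs ->] /=; apply: H.
by rewrite big_map mulr_sumr; apply: eq_bigr => x _; rewrite mulrA.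
Qed.

Lemma igG A p : A p -> ideal_gen A p.
Proof. by move=> Ap; exists [:: (1, p)]; rewrite big_seq1 mul1r; split=> // x; rewrite inE => /eqP ->. Qed.

Lemma igN A p : ideal_gen A p -> ideal_gen A (- p).
Proof. by move=> H; rewrite -mulN1r; apply: igM. Qed.

Lemma igB A p q : ideal_gen A p -> ideal_gen A q -> ideal_gen A (p - q).
Proof. by move=> H1 H2; apply: igD => //; apply: igN. Qed.

Lemma igZ A c p : ideal_gen A p -> ideal_gen A (c *: p).
Proof. by move=> H; rewrite -mul_mpolyC; apply: igM. Qed.

Lemma ig_sum A (I : eqType) (s : seq I) (F : I -> P) :
  (forall i, i \in s -> ideal_gen A (F i)) -> ideal_gen A (\sum_(i <- s) F i).
Proof.
elim: s => [|i s IH] H; first by rewrite big_nil; apply: ig0.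
rewrite big_cons; apply: igD; first by apply: H; rewrite inE eqxx.
by apply: IH => j js; apply: H; rewrite inE js orbT.
Qed.

Lemma ig_closed A B p : (forall q, A q -> ideal_gen B q) ->
  ideal_gen A p -> ideal_gen B p.
Proof.
move=> H; apply: ig_ind; [exact: ig0|exact: igD|].
by move=> r q Aq; apply: igM; apply: H.
Qed.

Lemma ig_mono A B p : (forall q, A q -> B q) -> ideal_gen A p -> ideal_gen B p.
Proof. by move=> H; apply: ig_closed => q /H; apply: igG. Qed.

Lemma ig_idem A p : ideal_gen (ideal_gen A) p -> ideal_gen A p.
Proof. by apply: ig_closed. Qed.

Lemma mcoeffMXg p u m :
  (p * 'X_[u])@_m = if (u <= m)%MM then p@_(m - u)%MM else 0.
Proof.
case: ifP => H.
  by rewrite -{1}(submK H) addmC mcoeffMX.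
apply/eqP; rewrite mcoeff_eq0; apply/negP.
rewrite (perm_mem (msuppMX p u)) => /mapP [m' _ E].
by move: H; rewrite E lem_addr.
Qed.

Lemma mcoeffXMg p u m :
  ('X_[u] * p)@_m = if (u <= m)%MM then p@_(m - u)%MM else 0.
Proof. by rewrite mulrC mcoeffMXg. Qed.

Lemma msuppXM p u m :
  (m \in msupp ('X_[u] * p)) = (u <= m)%MM && ((m - u)%MM \in msupp p).
Proof. by rewrite !mcoeff_msupp mcoeffXMg; case: ifP => //; rewrite eqxx. Qed.

End Gen.

Section RL.
Variables (K : fieldType) (n : nat) (y : {perm 'I_n}).
Local Notation P := {mpoly K[n]}.
Implicit Types (u v w : 'X_{1..n}).

Definition beats u v k := (v (y k) < u (y k))%N &&
      [forall l : 'I_n, (k < l)%N ==> (v (y l) == u (y l))].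

Lemma rlE u v : revlex_lt y u v =
  (mdeg u < mdeg v)%N || ((mdeg u == mdeg v) && [exists k, beats u v k]).
Proof. by []. Qed.

Lemma rl_irr u : ~~ revlex_lt y u u.
Proof.
rewrite rlE ltnn /=; apply/negP => /andP [_ /existsP [k /andP [H _]]].
by rewrite ltnn in H.
Qed.

Lemma rl_deg u v : revlex_lt y u v -> (mdeg u <= mdeg v)%N.
Proof. by rewrite rlE => /orP [/ltnW|/andP [/eqP -> _]]. Qed.

Lemma rl_trans u v w : revlex_lt y u v -> revlex_lt y v w -> revlex_lt y u w.
Proof.
move=> H1 H2; have D1 := rl_deg H1; have D2 := rl_deg H2.
move: H1 H2; rewrite !rlE.
case: (ltngtP (mdeg u) (mdeg v)) => // E1; rewrite ?orbF ?orFb /=.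
  move=> _; case: (ltngtP (mdeg v) (mdeg w)) => // E2 _.
    by rewrite (ltn_trans E1 E2).
  by rewrite -E2 E1.
case: (ltngtP (mdeg v) (mdeg w)) => // E2; rewrite ?orbF ?orFb /=.
  by rewrite E1 E2.
rewrite E1 E2 ltnn eqxx /=.
move=> /existsP [k1 /andP [B1 /forallP F1]] /existsP [k2 /andP [B2 /forallP F2]].
apply/existsP.
case: (ltngtP k1 k2) => Hk.
- exists k2; apply/andP; split.
    by move: (F1 k2); rewrite Hk /= => /eqP <-.
  apply/forallP => l; apply/implyP => Hl.
  move: (F1 l) (F2 l); rewrite Hl (ltn_trans Hk Hl) /= => /eqP -> /eqP ->.
  by [].
- exists k1; apply/andP; split.
    by move: (F2 k1); rewrite Hk /= => /eqP ->.
  apply/forallP => l; apply/implyP => Hl.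
  move: (F1 l) (F2 l); rewrite Hl (ltn_trans Hk Hl) /= => /eqP -> /eqP ->.
  by [].
- have E : k2 = k1 by apply: val_inj.
  subst k2; exists k1; apply/andP; split; first exact: (ltn_trans B2 B1).
  apply/forallP => l; apply/implyP => Hl.
  by move: (F1 l) (F2 l); rewrite Hl /= => /eqP -> /eqP ->.
Qed.

Lemma rl_total u v : u != v -> revlex_lt y u v || revlex_lt y v u.
Proof.
move=> Huv; rewrite !rlE.
case: (ltngtP (mdeg u) (mdeg v)) => //= Ed.
have [i Hi] : exists i, u i != v i.
  apply/existsP; apply: contraR Huv => /existsPn H; apply/eqP/mnmP => i.
  by move: (H i); rewrite negbK => /eqP.
pose k0 := ((y^-1)%g i).
have Pk0 : u (y k0) != v (y k0) by rewrite /k0 permKV.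
case: (@arg_maxnP _ k0 (fun k => u (y k) != v (y k)) (fun k => nat_of_ord k) Pk0)
  => k Pk Hmax.
have Fk : [forall l : 'I_n, (k < l)%N ==> (v (y l) == u (y l))].
  apply/forallP => l; apply/implyP => Hl; apply/eqP/esym/eqP.
  apply: contraTT Hl => H; rewrite -leqNgt; exact: Hmax.
case: (ltngtP (u (y k)) (v (y k))) => Hc.
- rewrite orbC; apply/orP; left; apply/existsP; exists k; apply/andP; split=> //.
  apply/forallP => l; apply/implyP => Hl; move: (Fk) => /forallP /(_ l).
  by rewrite Hl /= eq_sym.
- by apply/orP; left; apply/existsP; exists k; rewrite /beats Hc.
- by rewrite Hc eqxx in Pk.
Qed.

Lemma rl_add w u v : revlex_lt y (w + u)%MM (w + v)%MM = revlex_lt y u v.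
Proof.
rewrite !rlE !mdegD ltn_add2l eqn_add2l; congr (_ || (_ && _)).
apply: eq_existsb => k; rewrite /beats !mnmDE ltn_add2l; congr (_ && _).
by apply: eq_forallb => l; rewrite !mnmDE eqn_add2l.
Qed.


Lemma lm_uniq (p : P) m1 m2 : is_lm y p m1 -> is_lm y p m2 -> m1 = m2.
Proof.
move=> [H1 H1'] [H2 H2']; apply/eqP; apply/negPn/negP => Hne.
have Hne' : m2 != m1 by rewrite eq_sym.
have := rl_trans (H1' _ H2 Hne') (H2' _ H1 Hne).
by rewrite (negbTE (rl_irr _)).
Qed.

Lemma max_exists (s : seq 'X_{1..n}) : s != [::] ->
  exists2 m, m \in s & forall m', m' \in s -> m' != m -> revlex_lt y m' m.
Proof.
elim: s => [|a s IH] // _.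
case: (eqVneq s [::]) => [->|Hs].
  by exists a; rewrite ?inE // => m'; rewrite inE => ->.
have [m ms Hm] := IH Hs.
case: (eqVneq a m) => [Eam|Ham].
  exists m; rewrite ?inE ?ms ?orbT // => m'; rewrite inE => /orP [/eqP ->|]; first by rewrite Eam eqxx.
  exact: Hm.
case/orP: (rl_total Ham) => Hr.
  exists m; rewrite ?inE ?ms ?orbT // => m'; rewrite inE => /orP [/eqP -> _|]; first exact: Hr.
  exact: Hm.
exists a; rewrite ?inE ?eqxx // => m'; rewrite inE => /orP [/eqP ->|m's]; first by rewrite eqxx.
move=> _; case: (eqVneq m' m) => [->//|Hne]; exact: rl_trans (Hm _ m's Hne) Hr.
Qed.

Lemma lm_exists (p : P) : p != 0 -> exists m, is_lm y p m.
Proof.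
move=> Hp; have : msupp p != [::] by rewrite msupp_eq0.
by move/max_exists => [m H1 H2]; exists m.
Qed.

Lemma is_lm_XM (p : P) w m : is_lm y p m -> is_lm y ('X_[w] * p) (w + m)%MM.
Proof.
move=> [H1 H2]; split; first by rewrite msuppXM lem_addr addmC addmK.
move=> m'; rewrite msuppXM => /andP [Hw Hm'] Hne.
rewrite -(submK Hw) addmC rl_add; apply: H2 => //.
apply: contraNneq Hne => E; by rewrite -E addmC submK.
Qed.

Lemma is_lm_XM_inv (p : P) w m : is_lm y ('X_[w] * p) m ->
  (w <= m)%MM /\ is_lm y p (m - w)%MM.
Proof.
move=> [H1 H2]; move: (H1); rewrite msuppXM => /andP [Hw Hm]; split=> //; split=> //.
move=> m' Hm' Hne; rewrite -(rl_add w) [X in revlex_lt _ _ X]addmC submK //.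
apply: H2; first by rewrite msuppXM lem_addr addmC addmK.
apply: contraNneq Hne => E; by rewrite -E addmC addmK.
Qed.

Lemma mono_ideal (M : 'X_{1..n} -> Prop) m0 :
  ideal_gen (fun q : P => exists m, M m /\ q = 'X_[m]) 'X_[m0] ->
  exists m, M m /\ (m <= m0)%MM.
Proof.
move=> H.
suff : ('X_[m0] : P)@_m0 != 0 -> exists m, M m /\ (m <= m0)%MM.
  by apply; rewrite mcoeffX eqxx oner_neq0.
move: H; apply: (ig_ind (Q := fun p : P => p@_m0 != 0 -> exists m, M m /\ (m <= m0)%MM)).
- by rewrite mcoeff0 eqxx.
- move=> p q Hp Hq; rewrite mcoeffD; case: (eqVneq p@_m0 0) => [->|/Hp //].
  by rewrite add0r.
- move=> r p [m [Mm ->]]; rewrite mcoeffMXg; case: ifP; last by rewrite eqxx.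
  by move=> Hm _; exists m.
Qed.

End RL.

Section Hom.
Variables (K : fieldType) (n : nat).
Local Notation P := {mpoly K[n]}.
Implicit Types (p q r : P) (u v w m : 'X_{1..n}).

Definition homD q D := forall m, m \in msupp q -> mdeg m = D.

Lemma mcoeff_pihomog e p m :
  (pihomog mdeg e p)@_m = if mdeg m == e then p@_m else 0.
Proof.
rewrite pihomogE raddf_sum /= big_mkcond /=.
under eq_bigr do rewrite mcoeffZ mcoeffX.
case: (boolP (m \in msupp p)) => Hm.
  rewrite (bigD1_seq m) ?msupp_uniq //= eqxx mulr1 big1 ?addr0 //.
  by move=> i /negbTE Hi; rewrite Hi mulr0 if_same.
rewrite big1_seq; last first.
  move=> i /andP [_ Hi]; case: (eqVneq i m) => [E|Ne]; first by rewrite -E Hi in Hm.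
  by rewrite mulr0 if_same.
by case: ifP => // _; apply/esym/eqP; rewrite mcoeff_eq0.
Qed.

Lemma pihomog_MX e r u :
  pihomog mdeg e (r * 'X_[u]) =
  if (mdeg u <= e)%N then pihomog mdeg (e - mdeg u) r * 'X_[u] else 0.
Proof.
apply/mpolyP => m.
case: (leqP (mdeg u) e) => He; rewrite mcoeff_pihomog mcoeffMXg ?mcoeff0 ?mcoeffMXg.
  case: (boolP (u <= m)%MM) => Hum; last by rewrite if_same.
  have Dm : mdeg m = (mdeg (m - u) + mdeg u)%N by rewrite -mdegD submK.
  rewrite mcoeff_pihomog Dm.
  have -> : (mdeg (m - u) + mdeg u == e)%N = (mdeg (m - u) == e - mdeg u)%N.
    by rewrite -{1}(subnK He) eqn_add2r.
  by [].
case: (boolP (u <= m)%MM) => Hum; last by rewrite if_same.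
have Dm : mdeg m = (mdeg (m - u) + mdeg u)%N by rewrite -mdegD submK.
case: eqP => // Em.
by move: He; rewrite -Em Dm ltnNge leq_addl.
Qed.

Lemma ig_homog (A : P -> Prop) p e :
  (forall q, A q -> exists D, homD q D) ->
  ideal_gen A p -> ideal_gen A (pihomog mdeg e p).
Proof.
move=> HA H.
suff HQ : forall p0, ideal_gen A p0 -> forall e0, ideal_gen A (pihomog mdeg e0 p0) by exact: HQ.
apply: (ig_ind (Q := fun p => forall e, ideal_gen A (pihomog mdeg e p))).
- by move=> e0; rewrite pihomog0; apply: ig0.
- by move=> p1 q1 Hp Hq e0; rewrite pihomogD; apply: igD.
- move=> r q Aq e0; have [D HD] := HA q Aq.
  rewrite {1}(mpolyE q) mulr_sumr raddf_sum /=.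
  under eq_bigr do rewrite -scalerAr linearZ /= pihomog_MX.
  rewrite big_seq; under eq_bigr => m Hm do rewrite (HD m Hm).
  case: leqP => HDe; last by rewrite big1; [apply: ig0 | move=> *; rewrite scaler0].
  rewrite -big_seq; under eq_bigr do rewrite scalerAr.
  rewrite -mulr_sumr -mpolyE; apply: igM; exact: igG.
Qed.

Lemma divides_all (h : P) w : (forall m, m \in msupp h -> (w <= m)%MM) ->
  mdivides 'X_[w] h.
Proof.
move=> H; exists (\sum_(m <- msupp h) h@_m *: 'X_[m - w]).
rewrite mulr_sumr {1}(mpolyE h) big_seq [RHS]big_seq; apply: eq_bigr => m Hm.
by rewrite -scalerAr -mpolyXD addmC submK // H.
Qed.

End Hom.

Section GB.
Variables (K : fieldType) (n : nat) (y : {perm 'I_n}).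
Local Notation P := {mpoly K[n]}.
Implicit Types (p q r : P) (u v w m : 'X_{1..n}).

Lemma lem_mdeg u v : (u <= v)%MM -> (mdeg u <= mdeg v)%N.
Proof. by move=> H; rewrite -(submK H) mdegD leq_addl. Qed.

Lemma XM_div u v : (u <= v)%MM -> 'X_[v] = 'X_[v - u] * ('X_[u] : P).
Proof. by move=> H; rewrite -mpolyXD submK. Qed.

Lemma LM_in_GB (I Gs : P -> Prop) f m : groebner_basis y I Gs -> I f -> is_lm y f m ->
  exists g mg, [/\ Gs g, is_lm y g mg & (mg <= m)%MM].
Proof.
move=> [_ [_ Hiff]] If Hm.
have : ideal_gen (LMs y Gs) 'X_[m] by apply/Hiff; apply: igG; exists f, m.
move=> H.
have H2 : ideal_gen (fun q : P => exists mg, (exists g, Gs g /\ is_lm y g mg) /\ q = 'X_[mg]) 'X_[m].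
  apply: ig_mono H.
  by move=> q [g [mg [Gg [Hl ->]]]]; exists mg; split=> //; exists g.
have [mg [[g [Gg Hl]] Hle]] := mono_ideal H2.
by exists g, mg.
Qed.

Lemma gb_homog (A : P -> Prop) Gs :
  (forall q, A q -> exists D, homD q D) ->
  reduced_groebner_basis y (ideal_gen A) Gs ->
  forall g m, Gs g -> is_lm y g m -> homD g (mdeg m).
Proof.
move=> HA [HGB [_ Hred]] g m Gg Hm m' Hm'.
case: (eqVneq (mdeg m') (mdeg m)) => // Hne; exfalso.
have [_ [GI _]] := HGB.
pose g' := g - pihomog mdeg (mdeg m) g.
have Ig' : ideal_gen A g' by apply: igB; [exact: GI | apply: ig_homog => //; exact: GI].
have Cg' : forall m0, g'@_m0 = if mdeg m0 == mdeg m then 0 else g@_m0.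
  by move=> m0; rewrite mcoeffB mcoeff_pihomog; case: ifP; rewrite ?subrr ?subr0.
have g'0 : g' != 0.
  apply/negP => /eqP E; move: (Cg' m'); rewrite E mcoeff0 (negbTE Hne) => /esym/eqP.
  by rewrite mcoeff_eq0 Hm'.
have [m2 Hm2] := lm_exists y g'0.
have Hm2s : m2 \in msupp g' := Hm2.1.
have [Dm2 m2g] : mdeg m2 != mdeg m /\ m2 \in msupp g.
  move: Hm2s; rewrite !mcoeff_msupp Cg'; by case: ifP => //; rewrite eqxx.
have [g2 [mg2 [Gg2 Hmg2 Hle]]] := LM_in_GB HGB Ig' Hm2.
case: (eqVneq g2 g) => [E|Ne].
  subst g2; have E := lm_uniq Hmg2 Hm; subst mg2.
  have D1 := lem_mdeg Hle.
  have Hne2 : m2 != m by apply: contraNneq Dm2 => ->.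
  have D2 := rl_deg (Hm.2 _ m2g Hne2).
  by move/eqP: Dm2; apply; apply/eqP; rewrite eqn_leq D1 D2.
apply: (Hred g Gg m2 m2g).
rewrite (XM_div Hle); apply: igM; apply: igG.
by exists g2, mg2; split=> //; split=> //; apply/eqP.
Qed.

End GB.

Section Fact.
Variables (K : fieldType) (n : nat) (e : 'I_n).
Local Notation P := {mpoly K[n]}.
Implicit Types (p q r g h : P) (u v w m : 'X_{1..n}).
Local Notation x := ('X_e : P).

Lemma mpolyX_neq0 m : ('X_[m] : P) != 0.
Proof. by apply/negP => /eqP E; move: (mcoeffX K m m); rewrite E mcoeff0 eqxx => /eqP; rewrite eq_sym oner_eq0. Qed.

Lemma xk_neq0 k : x ^+ k != 0.
Proof. by apply: expf_neq0; apply: mpolyX_neq0. Qed.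

Lemma fact_exists g : g != 0 ->
  exists k h, g = x ^+ k * h /\ ~ mdivides (x ^+ k.+1) g.
Proof.
move=> g0; apply: NNPP => H.
have Hall : forall k, mdivides (x ^+ k) g.
  elim=> [|k [h Eh]]; first by exists g; rewrite expr0 mul1r.
  apply: NNPP => Hn; apply: H; by exists k, h.
have [h Eh] := Hall (msize g).
move: Eh; set N := msize g => Eh.
have h0 : h != 0 by apply: contraNneq g0 => E; rewrite Eh E mulr0.
have [m Hm] : exists m, m \in msupp h.
  have : msupp h != [::] by rewrite msupp_eq0.
  by case: (msupp h) => [|a s] //; exists a; rewrite inE eqxx.
have : (U_(e) *+ N + m)%MM \in msupp g.
  by rewrite Eh mpolyXn msuppXM lem_addr addmC addmK.
rewrite /N.
move/msize_mdeg_lt; rewrite mdegD mdegMn mdeg1 mul1n => /(leq_ltn_trans (leq_addr _ _)).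
by rewrite ltnn.
Qed.

Lemma fact_uniq g k h k' h' :
  g = x ^+ k * h -> ~ mdivides (x ^+ k.+1) g ->
  g = x ^+ k' * h' -> ~ mdivides (x ^+ k'.+1) g -> h = h'.
Proof.
move=> E1 N1 E2 N2.
have Ek : k = k'.
  case: (ltngtP k k') => // Hk.
    exfalso; apply: N1; exists (x ^+ (k' - k.+1) * h').
    by rewrite E2 mulrA -exprD subnKC.
  exfalso; apply: N2; exists (x ^+ (k - k'.+1) * h).
  by rewrite E1 mulrA -exprD subnKC.
subst k'; apply: (mulfI (xk_neq0 k)); by rewrite -E1 -E2.
Qed.

Lemma lm_div (y : {perm 'I_n}) (Hpos : forall k : 'I_n, (k <= (y^-1)%g e)%N) h mh D :
  homD h D -> is_lm y h mh -> (0 < mh e)%N -> mdivides x h.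
Proof.
move=> HD [Hmh Hlt] He; apply: divides_all => m Hm.
rewrite lep1mP -lt0n.
case: (eqVneq m mh) => [->//|Hne].
have := Hlt m Hm Hne; rewrite rlE (HD m Hm) (HD mh Hmh) ltnn eqxx /=.
case/existsP => k /andP [Hb /forallP Hf].
case: (ltngtP k ((y^-1)%g e)) => Hk.
- by move: (Hf ((y^-1)%g e)); rewrite Hk permKV /= => /eqP <-.
- by move: (Hpos k); rewrite leqNgt Hk.
- have -> : e = y k by rewrite (_ : k = (y^-1)%g e) ?permKV //; apply: val_inj.
  exact: leq_ltn_trans Hb.
Qed.

End Fact.

Section Graph1.
Variables (K : fieldType) (d : nat) (E : rel 'I_d) (Eirr : irreflexive E).
Local Notation P := (RG K E).
Local Notation x0 := (xS K E (stab_empty E)).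

Lemma stable_sub (A B : {set 'I_d}) : A \subset B -> stable E B -> stable E A.
Proof.
move=> /subsetP AB /forallP H; apply/forallP => i; apply/implyP => Ai.
apply/forallP => j; apply/implyP => Aj.
by move: (H i) => /implyP /(_ (AB _ Ai)) /forallP /(_ j) /implyP /(_ (AB _ Aj)).
Qed.

Lemma stable1 j : stable E [set j].
Proof.
apply/forallP => i; apply/implyP; rewrite inE => /eqP ->.
apply/forallP => k; apply/implyP; rewrite inE => /eqP ->.
by rewrite Eirr.
Qed.

Definition single j : stabT E := exist _ [set j] (stable1 j).

Lemma L_sub (S : stabT E) i (Hi : i \in val S) :
  stable E (val S :\ i).
Proof. apply: (stable_sub _ (valP S)); exact: subsetDl. Qed.

Lemma Lsat (S : stabT E) :
  L_G K E (x0 ^+ #|val S| * xS K E S - x0 * \prod_(j in val S) xS K E (single j)).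
Proof.
move: {2}#|val S| (leqnn #|val S|) => c; elim: c S => [|c IH] S Hc.
  have S0 : val S = set0 by apply/eqP; rewrite -cards_eq0 -leqn0.
  have -> : S = stab_empty E by apply: val_inj.
  by rewrite /= cards0 big_set0 expr0 mul1r mulr1 subrr; exact: ig0.
case: (ltnP #|val S| 2) => H2.
  case: (eqVneq #|val S| 0) => H0.
    apply: IH; by rewrite H0.
  have /cards1P [i Ei] : #|val S| == 1%N.
    by rewrite eqn_leq -ltnS H2 lt0n H0.
  have -> : S = single i by apply: val_inj.
  rewrite /= big_set1 cards1 expr1 subrr; exact: ig0.
have [i Hi] : exists i, i \in val S.
  by apply/card_gt0P; apply: leq_trans H2.
pose S' : stabT E := exist _ (val S :\ i) (L_sub Hi).
have HS' : #|val S| = #|val S'|.+1 by rewrite (cardsD1 i) Hi.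
have IH2 : L_G K E (x0 ^+ #|val S'| * xS K E S' - x0 * \prod_(j in val S') xS K E (single j)).
  by apply: IH; rewrite -ltnS -HS'.
have Hg : L_G K E (xS K E S' * xS K E (single i) - xS K E S * x0).
  apply: igG; exists S, S', (single i), i; split=> //.
rewrite HS' (big_setD1 i Hi) /=.
set k := #|_|.
have -> : x0 ^+ k.+1 * xS K E S -
    x0 * (xS K E (single i) * \prod_(j in val S :\ i) xS K E (single j)) =
  (- x0 ^+ k) * (xS K E S' * xS K E (single i) - xS K E S * x0) +
  xS K E (single i) * (x0 ^+ k * xS K E S' - x0 * \prod_(j in val S') xS K E (single j)).
  rewrite exprS /=; ring.
by apply: igD; apply: igM.
Qed.

End Graph1.

Section Graph2.
Variables (K : fieldType) (d : nat) (E : rel 'I_d) (Eirr : irreflexive E).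
Local Notation P := (RG K E).
Local Notation n := (nS E).
Local Notation x0 := (xS K E (stab_empty E)).
Local Notation wd := (widen_ord (leqnSn d)).

Lemma pmM (p q : P) : pi_map K E (p * q) = pi_map K E p * pi_map K E q.
Proof. rewrite /pi_map. exact: (rmorphM (mmap (@mpolyC _ K) _)). Qed.
Lemma pmD (p q : P) : pi_map K E (p + q) = pi_map K E p + pi_map K E q.
Proof. rewrite /pi_map. exact: (rmorphD (mmap (@mpolyC _ K) _)). Qed.
Lemma pm0 : pi_map K E 0 = 0.
Proof. rewrite /pi_map. exact: (rmorph0 (mmap (@mpolyC _ K) _)). Qed.

Lemma IG_ideal (A : P -> Prop) p : (forall q, A q -> I_G K E q) -> ideal_gen A p -> I_G K E p.
Proof.
move=> H; apply: ig_ind; first exact: pm0.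
  by move=> p1 q1; rewrite /I_G pmD => -> ->; rewrite addr0.
by move=> r q /H; rewrite /I_G pmM => ->; rewrite mulr0.
Qed.

Definition mu (i : 'I_n) : 'X_{1..d.+1} :=
  (U_(ord_max) + \sum_(j in val (enum_val i)) U_(wd j))%MM.
Definition Mu (a : 'X_{1..n}) : 'X_{1..d.+1} := (\sum_(i < n) mu i *+ a i)%MM.
Definition rr (j : 'I_d) : 'I_n := enum_rank (single Eirr j).
Definition back (v : 'X_{1..d.+1}) : 'X_{1..n} := (\sum_(j < d) U_(rr j) *+ v (wd j))%MM.
Definition tdeg (v : 'X_{1..d.+1}) : nat := \sum_(j < d) v (wd j).
Definition smax (v : 'X_{1..d.+1}) : nat := v ord_max.

Lemma pi_img_X i : pi_img K E (enum_val i) = 'X_[mu i].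
Proof. by rewrite /pi_img /mu mpolyXD mprodXE. Qed.

Lemma pmX a : pi_map K E 'X_[a] = 'X_[Mu a].
Proof.
rewrite /pi_map (mmapX _ (@mpolyC _ K)) /mmap1 /Mu -mprodXnE.
by apply: eq_bigr => i _; rewrite pi_img_X.
Qed.

Lemma pm_sum (f : P) : pi_map K E f = \sum_(a <- msupp f) f@_a *: 'X_[Mu a].
Proof.
rewrite {1}(mpolyE f) /pi_map raddf_sum /=; apply: eq_bigr => a _.
rewrite (mmapZ _ (@mpolyC _ K)) -/(pi_map K E _) pmX /=.
by rewrite mul_mpolyC.
Qed.

Lemma MuD a b : Mu (a + b)%MM = (Mu a + Mu b)%MM.
Proof.
apply/mnmP => k; rewrite mnmDE /Mu !mnm_sumE -big_split /=.
by apply: eq_bigr => i _; rewrite !mulmnE mnmDE mulnDr.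
Qed.

Lemma Mu0 : Mu 0%MM = 0%MM.
Proof.
apply/mnmP => k; rewrite /Mu mnm_sumE mnm0E big1 // => i _.
by rewrite mulmnE mnm0E muln0.
Qed.

Lemma MuU i : Mu U_(i)%MM = mu i.
Proof.
apply/mnmP => k; rewrite /Mu mnm_sumE (bigD1 i) //= big1 ?addn0.
  by rewrite mulmnE mnm1E eqxx muln1.
by move=> j /negbTE Hj; rewrite mulmnE mnm1E eq_sym Hj muln0.
Qed.

Lemma backE v k : back v k = (\sum_(j < d) (rr j == k) * v (wd j))%N.
Proof.
rewrite /back mnm_sumE; apply: eq_bigr => j _; by rewrite mulmnE mnm1E mulnC.
Qed.

Lemma backD u v : back (u + v)%MM = (back u + back v)%MM.
Proof.
apply/mnmP => k; rewrite mnmDE !backE -big_split /=.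
by apply: eq_bigr => j _; rewrite mnmDE mulnDr.
Qed.

Lemma back0 : back 0%MM = 0%MM.
Proof. apply/mnmP => k; rewrite backE mnm0E big1 // => j _; by rewrite mnm0E muln0. Qed.

Lemma tdegD u v : tdeg (u + v)%MM = (tdeg u + tdeg v)%N.
Proof. by rewrite /tdeg -big_split; apply: eq_bigr => j _; rewrite mnmDE. Qed.

Lemma tdeg0 : tdeg 0%MM = 0%N.
Proof. by rewrite /tdeg big1 // => j _; rewrite mnm0E. Qed.

Lemma smaxD u v : smax (u + v)%MM = (smax u + smax v)%N.
Proof. by rewrite /smax mnmDE. Qed.

Lemma smax0 : smax 0%MM = 0%N.
Proof. by rewrite /smax mnm0E. Qed.

Lemma mu_wd i j : mu i (wd j) = (j \in val (enum_val i)).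
Proof.
rewrite /mu mnmDE mnm1E mnm_sumE.
have -> : (ord_max == wd j) = false.
  by apply/negbTE; rewrite -val_eqE /= neq_ltn ltn_ord orbT.
rewrite add0n (eq_bigr (fun k => nat_of_bool (k == j))); last first.
  by move=> k _; rewrite mnm1E -val_eqE /= val_eqE.
case: (boolP (j \in val (enum_val i))) => Hj.
  rewrite (bigD1 j) //= eqxx big1 ?addn0 // => k /andP [_ /negbTE ->] //.
by rewrite big1 // => k Hk; case: eqP => // Ek; rewrite -Ek Hk in Hj.
Qed.

Lemma mu_max i : smax (mu i) = 1%N.
Proof.
rewrite /smax /mu mnmDE mnm1E eqxx mnm_sumE big1 // => k _.
rewrite mnm1E; apply/eqP; rewrite eqb0 -val_eqE /= neq_ltn ltn_ord //.
Qed.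

Lemma mu_tdeg i : tdeg (mu i) = #|val (enum_val i)|.
Proof.
rewrite /tdeg; under eq_bigr do rewrite mu_wd.
rewrite -sum1_card [RHS]big_mkcond /=.
by apply: eq_bigr => j _; case: (_ \in _).
Qed.

Lemma mu_back i : ('X_[back (mu i)] : P) = \prod_(j in val (enum_val i)) xS K E (single Eirr j).
Proof.
rewrite /xS mprodXE; congr 'X_[_]; apply/mnmP => k.
rewrite backE mnm_sumE [RHS]big_mkcond /=; apply: eq_bigr => j _.
by rewrite mu_wd mnm1E /rr; case: (_ \in _); rewrite ?muln1 ?muln0.
Qed.


End Graph2.

Lemma grp0 (K : fieldType) (n n' : nat) (f : {mpoly K[n]})
  (Mu : 'X_{1..n} -> 'X_{1..n'}) (V : lmodType K) (G : 'X_{1..n'} -> V) :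
  \sum_(a <- msupp f) f@_a *: ('X_[Mu a] : {mpoly K[n']}) = 0 ->
  \sum_(a <- msupp f) f@_a *: G (Mu a) = 0.
Proof.
move=> H0.
set r := undup [seq Mu a | a <- msupp f].
have HG : forall a, a \in msupp f -> G (Mu a) = \sum_(v <- r) (Mu a == v)%:R *: G v.
  move=> a Ha; rewrite (bigD1_seq (Mu a)) ?undup_uniq ?mem_undup ?map_f //= eqxx scale1r.
  rewrite big1 ?addr0 // => v /negbTE; rewrite eq_sym => ->; by rewrite scale0r.
rewrite big_seq; under eq_bigr => a Ha do rewrite (HG a Ha) scaler_sumr.
rewrite -big_seq exchange_big /= big1 // => v _.
rewrite (eq_bigr (fun a => (f@_a * (Mu a == v)%:R) *: G v)); last by move=> a _; rewrite scalerA.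
rewrite -scaler_suml.
have -> : \sum_(a <- msupp f) f@_a * (Mu a == v)%:R = 0.
  have Hc := congr1 (mcoeff v) H0; rewrite raddf_sum mcoeff0 /= in Hc.
  apply: (etrans _ Hc); by apply: eq_bigr => a _; rewrite mcoeffZ mcoeffX.
by rewrite scale0r.
Qed.

Lemma mnm_ind (n : nat) (Q : 'X_{1..n} -> Prop) :
  Q 0%MM -> (forall i b, Q b -> Q (U_(i) + b)%MM) -> forall a, Q a.
Proof.
move=> Q0 QS a; move: {2}(mdeg a) (leqnn (mdeg a)) => c.
elim: c a => [|c IH] a Ha.
  by move: Ha; rewrite leqn0 mdeg_eq0 => /eqP ->.
case: (eqVneq a 0%MM) => [->//|Ha0].
have [i Hi] : exists i, a i != 0%N.
  apply/existsP; apply: contraR Ha0 => /existsPn H; apply/eqP/mnmP => i.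
  by rewrite mnm0E; move: (H i); rewrite negbK => /eqP.
have Hle : (U_(i) <= a)%MM by rewrite lep1mP.
rewrite -(submK Hle) addmC; apply: QS; apply: IH.
by move: Ha; rewrite -{1}(submK Hle) mdegD mdeg1 addn1 ltnS.
Qed.

Section Graph3.
Variables (K : fieldType) (d : nat) (E : rel 'I_d) (Eirr : irreflexive E).
Local Notation P := (RG K E).
Local Notation n := (nS E).
Local Notation x0 := (xS K E (stab_empty E)).

Lemma congr_mono a :
  L_G K E (x0 ^+ tdeg (Mu a) * 'X_[a] - x0 ^+ smax (Mu a) * 'X_[back Eirr (Mu a)]).
Proof.
elim/mnm_ind: a => [|i b IH].
  by rewrite Mu0 tdeg0 smax0 back0 mpolyX0 subrr; apply: ig0.
rewrite MuD MuU tdegD smaxD backD mu_tdeg mu_max !mpolyXD mu_back !exprD.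
have H1 := Lsat K Eirr (enum_val i).
rewrite /xS enum_valK in H1.
set A1 := x0 ^+ _ in H1 *; set B1 := x0 * _ in H1 *.
set A2 := x0 ^+ tdeg _; set B2 := x0 ^+ smax _.
have -> : A1 * A2 * ('X_i * 'X_[b]) - x0 ^+ 1 * B2 *
    (\prod_(j in val (enum_val i)) xS K E (single Eirr j) * 'X_[back Eirr (Mu b)]) =
  (A1 * 'X_i - B1) * (A2 * 'X_[b]) + B1 * (A2 * 'X_[b] - B2 * 'X_[back Eirr (Mu b)]).
  rewrite /B1 /xS; ring.
by apply: igD; [rewrite mulrC; exact: igM | exact: igM].
Qed.

Lemma tdeg_bound (a : 'X_{1..n}) : (tdeg (Mu a) <= d * mdeg a)%N.
Proof.
elim/mnm_ind: a => [|i b IH]; first by rewrite Mu0 tdeg0.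
rewrite MuD MuU tdegD mu_tdeg mdegD mdeg1 mulnDr muln1 leq_add //.
by rewrite -[X in (_ <= X)%N]card_ord max_card.
Qed.

End Graph3.

Section Graph4.
Variables (K : fieldType) (d : nat) (E : rel 'I_d) (Eirr : irreflexive E).
Local Notation P := (RG K E).
Local Notation n := (nS E).
Local Notation x0 := (xS K E (stab_empty E)).

Lemma saturation (f : P) : I_G K E f -> exists N, L_G K E (x0 ^+ N * f).
Proof.
move=> Hf; rewrite /I_G pm_sum in Hf.
pose N := (d * msize f)%N; exists N.
pose Gf (v : 'X_{1..d.+1}) : P := x0 ^+ (N - tdeg v + smax v) * 'X_[back Eirr v].
have -> : x0 ^+ N * f = \sum_(a <- msupp f) f@_a *: (x0 ^+ N * 'X_[a] - Gf (Mu a))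
    + \sum_(a <- msupp f) f@_a *: Gf (Mu a).
  rewrite -big_split /=; under eq_bigr do rewrite -scalerDr subrK.
  rewrite {1}(mpolyE f) mulr_sumr; apply: eq_bigr => a _; by rewrite scalerAr.
rewrite (@grp0 _ _ _ _ _ _ Gf Hf) addr0; apply: ig_sum => a Ha; apply: igZ.
have Ht : (tdeg (Mu a) <= N)%N.
  apply: leq_trans (tdeg_bound a) _; rewrite leq_mul2l; apply/orP; right.
  exact: ltnW (msize_mdeg_lt Ha).
have -> : x0 ^+ N * 'X_[a] - Gf (Mu a) = x0 ^+ (N - tdeg (Mu a)) *
   (x0 ^+ tdeg (Mu a) * 'X_[a] - x0 ^+ smax (Mu a) * 'X_[back Eirr (Mu a)]).
  rewrite /Gf mulrBr !mulrA -!exprD subnK //.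
apply: igM; exact: congr_mono.
Qed.

Lemma pm_xS (S : stabT E) : pi_map K E (xS K E S) = pi_img K E S.
Proof. by rewrite /xS pmX MuU -pi_img_X enum_rankK. Qed.

Lemma Jgen_IG S1 S2 S3 S4 :
  val S1 :&: val S2 = set0 -> val S3 :&: val S4 = set0 ->
  val S1 :|: val S2 = val S3 :|: val S4 ->
  I_G K E (xS K E S1 * xS K E S2 - xS K E S3 * xS K E S4).
Proof.
move=> D12 D34 U.
have Hpi : forall (A B : stabT E), val A :&: val B = set0 ->
  pi_map K E (xS K E A * xS K E B) =
  'X_(@ord_max d) * 'X_(@ord_max d) * \prod_(j in val A :|: val B) 'X_(widen_ord (leqnSn d) j).
  move=> A B DAB; rewrite pmM !pm_xS /pi_img.
  set F := fun j : 'I_d => ('X_(widen_ord (leqnSn d) j) : {mpoly K[d.+1]}).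
  have HU : \prod_(j in val A :|: val B) F j = \prod_(j in [predU (val A) & (val B)]) F j.
    by apply: eq_bigl => j; rewrite !inE.
  rewrite HU bigU; last by rewrite -setI_eq0 DAB.
  by rewrite /= mulrACA.
have pmB : forall p q : P, pi_map K E (p - q) = pi_map K E p - pi_map K E q.
  by move=> p q; rewrite /pi_map; exact: (rmorphB (mmap (@mpolyC _ K) _)).
rewrite /I_G pmB.
by rewrite Hpi // Hpi // U subrr.
Qed.

Lemma Jgen_hom S1 S2 S3 S4 :
  homD (xS K E S1 * xS K E S2 - xS K E S3 * xS K E S4) 2.
Proof.
move=> m; rewrite /xS -!mpolyXD => /msuppB_le; rewrite mem_cat !msuppX !inE.
by case/orP => /eqP ->; rewrite mdegD !mdeg1.
Qed.

Lemma Lgen_Jgen q :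
  (exists (S S' Si : stabT E) (i : 'I_d),
    [/\ i \in val S, (2 <= #|val S|)%N, val S' = val S :\ i,
        val Si = [set i] &
        q = xS K E S' * xS K E Si - xS K E S * xS K E (stab_empty E)]) ->
  exists S1 S2 S3 S4 : stabT E,
    [/\ val S1 :&: val S2 = set0, val S3 :&: val S4 = set0,
        val S1 :|: val S2 = val S3 :|: val S4 &
        q = xS K E S1 * xS K E S2 - xS K E S3 * xS K E S4].
Proof.
move=> [S [S' [Si [i [Hi _ ES' ESi ->]]]]]; exists S', Si, S, (stab_empty E); split=> //.
- rewrite ES' ESi; apply/setP => j; rewrite !inE; by case: (j == i); rewrite ?andbF.
- by rewrite /= setI0.
- by rewrite ES' ESi /= setU0 setUC setD1K.
Qed.

Lemma I_cases (I : P -> Prop) :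
  I = I_G2 K E \/ I = J_G K E \/ I = L_G K E ->
  exists A : P -> Prop, [/\ I = ideal_gen A, (forall q, A q -> exists D, homD q D),
     (forall q, A q -> I_G K E q) & (forall p, L_G K E p -> I p)].
Proof.
have LJ : forall p, L_G K E p -> J_G K E p.
  by move=> p; apply: ig_mono => q /Lgen_Jgen.
have JI : forall p, J_G K E p -> I_G2 K E p.
  move=> p; apply: ig_mono => q [S1 [S2 [S3 [S4 [H1 H2 H3 ->]]]]]; split.
    exact: Jgen_IG.
  by apply/allP => m /Jgen_hom ->.
case=> [->|[->|->]].
- exists (fun p => I_G K E p /\ all (fun m => mdeg m == 2%N) (msupp p)); split=> //.
  + by move=> q [_ /allP H]; exists 2%N => m /H /eqP.
  + by move=> q [].
  + by move=> p /LJ /JI.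
- eexists; split; first reflexivity.
  + by move=> q [S1 [S2 [S3 [S4 [_ _ _ ->]]]]]; exists 2%N; apply: Jgen_hom.
  + by move=> q [S1 [S2 [S3 [S4 [H1 H2 H3 ->]]]]]; apply: Jgen_IG.
  + exact: LJ.
- eexists; split; first reflexivity.
  + by move=> q /Lgen_Jgen [S1 [S2 [S3 [S4 [_ _ _ ->]]]]]; exists 2%N; apply: Jgen_hom.
  + by move=> q /Lgen_Jgen [S1 [S2 [S3 [S4 [H1 H2 H3 ->]]]]]; apply: Jgen_IG.
  + by [].
Qed.

End Graph4.

Unset Implicit Arguments. Set Strict Implicit.


Theorem proposition4p2 (K : fieldType) (d : nat) (E : rel 'I_d)
  (Esym : ssrbool.symmetric E) (Eirr : irreflexive E)
  (I : RG K E -> Prop)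
  (HI : I = I_G2 K E \/ I = J_G K E \/ I = L_G K E)
  (y : {perm 'I_(nS E)})
  (Hy : forall S : stabT E,
          ((y^-1)%g (enum_rank S) <= (y^-1)%g (enum_rank (stab_empty E)))%N)
  (Gs : RG K E -> Prop)
  (HGs : reduced_groebner_basis y I Gs) :
  groebner_basis y (I_G K E)
    (fun h => exists (g : RG K E) (k : nat),
       [/\ Gs g, g = xS K E (stab_empty E) ^+ k * h &
           ~ mdivides (xS K E (stab_empty E) ^+ k.+1) g]).
Proof.
have [A [IA Ahom AIG LI]] := I_cases HI.
set e := enum_rank (stab_empty E).
set x0 := xS K E (stab_empty E).
have HGs' := HGs.
move: HGs' => [[[s Hs] [GI Hiff]] [Hlm Hred]].
have GsIG : forall g, Gs g -> I_G K E g.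
  by move=> g /GI; rewrite IA; apply: IG_ideal.
have Gsnz : forall g, Gs g -> g != 0.
  move=> g /Hlm [m [[Hm _] _]]; apply: contraTneq Hm => ->; by rewrite msupp0.
have Ghom : forall g m, Gs g -> is_lm y g m -> homD g (mdeg m).
  move=> g m Gg Hm; apply: (gb_homog Ahom _ Gg Hm); by rewrite -IA.
have Hpos : forall k : 'I_(nS E), (k <= (y^-1)%g e)%N.
  by move=> k; move: (Hy (enum_val (y k))); rewrite enum_valK permK.
have Hx0 : forall k, x0 ^+ k = 'X_[U_(e) *+ k].
  by move=> k; rewrite mpolyXn.
set H := fun h => _.
have HIG : forall h, H h -> I_G K E h.
  move=> h [g [k [Gg Eg _]]]; move: (GsIG g Gg); rewrite /I_G Eg pmM Hx0 pmX.
  by move/eqP; rewrite mulf_eq0 (negbTE (mpolyX_neq0 _ _)) /= => /eqP.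
split; [|split].
-
  suff Hfin : forall s0 : seq (RG K E), (forall g, g \in s0 -> Gs g) -> exists s1 : seq (RG K E),
      forall h, (exists g k, [/\ g \in s0, g = x0 ^+ k * h & ~ mdivides (x0 ^+ k.+1) g])
                <-> h \in s1.
    have [s1 Hs1] := Hfin s (fun g gs => proj2 (Hs g) gs).
    exists s1 => h; rewrite -Hs1; split.
      by move=> [g [k [Gg E1 E2]]]; exists g, k; split=> //; apply/Hs.
    by move=> [g [k [Gg E1 E2]]]; exists g, k; split=> //; apply/Hs.
  elim=> [|g s0 IH] Hs0.
    by exists [::] => h; split=> // [[g [k [//]]]].
  have [s1 Hs1] := IH (fun g' g's => Hs0 g' (@mem_behead _ (g :: s0) _ g's)).
  have [k0 [h0 [E0 N0]]] := fact_exists e (Gsnz g (Hs0 g (mem_head _ _))).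
  exists (h0 :: s1) => h; rewrite inE; split.
    move=> [g' [k [g's E1 E2]]]; move: g's; rewrite inE => /orP [/eqP Eg|g's].
      rewrite Eg in E1 E2; apply/orP; left; apply/eqP.
      exact: (fact_uniq E1 E2 E0 N0).
    by apply/orP; right; apply/Hs1; exists g', k.
  case/orP => [/eqP ->|/Hs1 [g' [k [g's E1 E2]]]].
    by exists g, k0; split=> //; rewrite mem_head.
  by exists g', k; split=> //; rewrite inE g's orbT.
- by move=> h /HIG.
move=> q; split.
  apply: ig_mono => q' [p [m [Hp [Hm ->]]]]; exists p, m; split=> //; exact: HIG.
apply: ig_closed => q' [f [m [Hf [Hm ->]]]].
have [N HN] := saturation Eirr Hf.
have IfN := LI _ HN.
have HmN : is_lm y (x0 ^+ N * f) (U_(e) *+ N + m)%MM by rewrite Hx0; exact: is_lm_XM.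
have [g [mg [Gg Hmg Hle]]] := LM_in_GB (proj1 HGs) IfN HmN.
have [k [h [Eg Ng]]] := fact_exists e (Gsnz g Gg).
have [Hkg Hmh] : (U_(e) *+ k <= mg)%MM /\ is_lm y h (mg - U_(e) *+ k)%MM.
  by apply: is_lm_XM_inv; rewrite -Hx0 -Eg.
set mh := (mg - U_(e) *+ k)%MM in Hmh *.
have Hh : homD h (mdeg mg - k)%N.
  move=> m' Hm'; have : (U_(e) *+ k + m')%MM \in msupp g.
    by rewrite Eg Hx0 msuppXM lem_addr addmC addmK.
  by move/(Ghom g mg Gg Hmg); rewrite mdegD mdegMn mdeg1 mul1n => <-; rewrite addKn.
have Hmhe : mh e = 0%N.
  case: (posnP (mh e)) => // Hpos'; exfalso; apply: Ng.
  have [q0 Eq0] := lm_div Hpos Hh Hmh Hpos'.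
  by exists q0; rewrite Eg Eq0 exprSr mulrA.
have Hmhm : (mh <= m)%MM.
  apply/mnm_lepP => i; case: (eqVneq i e) => [->|Hie]; first by rewrite Hmhe.
  apply: (leq_trans (_ : mh i <= mg i)%N); first by rewrite mnmBE leq_subr.
  have Hei : (e == i) = false by apply/negbTE; rewrite eq_sym.
  by move/mnm_lepP: Hle => /(_ i); rewrite mnmDE mulmnE mnm1E Hei mul0n.
rewrite (XM_div K Hmhm); apply: igM; apply: igG.
exists h, mh; split; first by exists g, k.
by split.
Qed.
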